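(* Let $a\in[0,1)$, $q,t\in(0,1)$, $\nu>0$. For any $i,j\in\{0,1\}$ and $n_1,n_2\in\mathbb{N}$, $$\sum_{m_1,m_2\ge0}c_{m_1,m_2}\,Z^{\mathrm{left}}_a(i,j;m_1,m_2;n_1,n_2)=\sum_{m_1,m_2\ge0}c_{m_1,m_2}\,Z^{\mathrm{right}}_a(i,j;m_1,m_2;n_1,n_2),$$ where $c_{m_1,m_2}=h_{m_2}(-t;q)(-t\nu)^{m_1}h_{m_1}(-\frac{1}{\nu^2t};q)$ (only finitely many terms are nonzero).
   Context: Rogers–Szegő polynomials $h_m(x;q)=\sum_{k=0}^m\binom mk_qx^k$. Deformed boson vertices: a vertex has horizontal edges (left, right) carrying $0$ or $1$ arrow, and vertical edges (bottom, top) carrying any number $\ge0$ of arrows, with arrow conservation (left + bottom = right + top). With $m$ arrows entering from below, the ''black'' weights with rapidity $a$ are: (left 0, right 0, top $m$): $1$; (left 0, right 1, top $m-1$): $a$; (left 1, right 0, top $m+1$): $1-q^{m+1}$; (left 1, right 1, top $m$): $a$. The ''red'' weights with rapidity $a$ are: (0,0): $a$; (0,1): $1$; (1,0): $a(1-q^{m+1})$; (1,1): $1$. A boundary vertex lies on a horizontal edge, has one input and one output horizontal state, and weights with $D=(1-a\nu t)(1+a/\nu)$: (in 0, out 0): $\frac{a\nu^{-1}(1-t\nu^2)+(1-t)}{D}$; (in 0, out 1): $\frac{t(1-a^2)}{D}$; (in 1, out 0): $\frac{1-a^2}{D}$; (in 1, out 1): $\frac{a\nu^{-1}(1-t\nu^2)+a^2(1-t)}{D}$.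 $Z^{\mathrm{left}}_a(i,j;m_1,m_2;n_1,n_2)$ is the sum over internal horizontal edge states of the product of weights of the row consisting, from left to right, of: a horizontal input in state $i$, a boundary vertex, a black vertex with $m_2$ arrows entering from below and $n_2$ exiting at top, a black vertex with $m_1$ below and $n_1$ on top, and horizontal output in state $j$. $Z^{\mathrm{right}}_a$ is the same but with the row consisting of: input $i$, a red vertex $(m_2$ below, $n_2$ top$)$, a red vertex $(m_1,n_1)$, then a boundary vertex, output $j$. *)

(* Defs.v *)
From mathcomp Require Import all_boot all_order all_algebra.
Set Implicit Arguments. Unset Strict Implicit. Unset Printing Implicit Defensive.
Import Order.TTheory GRing.Theory Num.Theory.
Local Open Scope ring_scope.

Section Defs.
Variable R : realFieldType.

Definition qfact (q : R) (n : nat) : R := \prod_(i < n) (1 - q ^+ i.+1).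

Definition qbinom (q : R) (m k : nat) : R :=
  if (k <= m)%N then qfact q m / (qfact q k * qfact q (m - k)) else 0.

Definition RS (m : nat) (x q : R) : R :=
  \sum_(k < m.+1) qbinom q m k * x ^+ k.

(* Black vertex: m arrows below, horizontal left l / right r, top arrows;
   weight 0 unless arrow conservation l + m = r + top holds. *)
Definition black_w (a q : R) (m : nat) (l r : bool) (top : nat) : R :=
  if (top + r == m + l)%N then
    match l, r with
    | false, false => 1
    | false, true => a
    | true, false => 1 - q ^+ m.+1
    | true, true => a
    end
  else 0.

Definition red_w (a q : R) (m : nat) (l r : bool) (top : nat) : R :=
  if (top + r == m + l)%N then
    match l, r with
    | false, false => a
    | false, true => 1
    | true, false => a * (1 - q ^+ m.+1)
    | true, true => 1
    end
  else 0.

Definition bdry_w (a t nu : R) (i j : bool) : R :=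
  let D := (1 - a * nu * t) * (1 + a / nu) in
  match i, j with
  | false, false => (a / nu * (1 - t * nu ^+ 2) + (1 - t)) / D
  | false, true => t * (1 - a ^+ 2) / D
  | true, false => (1 - a ^+ 2) / D
  | true, true => (a / nu * (1 - t * nu ^+ 2) + a ^+ 2 * (1 - t)) / D
  end.

(* Row: input i, boundary vertex, black (m2,n2), black (m1,n1), output j. *)
Definition Zleft (a q t nu : R) (i j : bool) (m1 m2 n1 n2 : nat) : R :=
  \sum_(k : bool) \sum_(l : bool)
     bdry_w a t nu i k * black_w a q m2 k l n2 * black_w a q m1 l j n1.

(* Row: input i, red (m2,n2), red (m1,n1), boundary vertex, output j. *)
Definition Zright (a q t nu : R) (i j : bool) (m1 m2 n1 n2 : nat) : R :=
  \sum_(k : bool) \sum_(l : bool)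
     red_w a q m2 i k n2 * red_w a q m1 k l n1 * bdry_w a t nu l j.

Definition coefc (q t nu : R) (m1 m2 : nat) : R :=
  RS m2 (- t) q * (- (t * nu)) ^+ m1 * RS m1 (- (1 / (nu ^+ 2 * t))) q.

End Defs.

(* Main.v *)
Require Import Defs.
From mathcomp Require Import all_boot all_order all_algebra.
From mathcomp Require Import ring lra zify.
Import Order.TTheory GRing.Theory Num.Theory.
Local Open Scope ring_scope.
Set Implicit Arguments. Unset Strict Implicit.

Section QB.
Variable R : realFieldType.
Variable q : R.
Hypothesis q0 : 0 < q.
Hypothesis q1 : q < 1.

Lemma qpow_ne1 n : 1 - q ^+ n.+1 != 0.
Proof.
by rewrite subr_eq0 eq_sym lt_eqF // exprn_ilt1 // ltW.
Qed.

Lemma qfactS n : qfact q n.+1 = qfact q n * (1 - q ^+ n.+1).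
Proof. by rewrite /qfact big_ord_recr. Qed.

Lemma qfact0 : qfact q 0 = 1.
Proof. by rewrite /qfact big_ord0. Qed.

Lemma qfact_ne0 n : qfact q n != 0.
Proof.
elim: n => [|n IH]; first by rewrite qfact0 oner_eq0.
by rewrite qfactS mulf_neq0 // qpow_ne1.
Qed.

Lemma qbinom0 n : qbinom q n 0 = 1.
Proof.
rewrite /qbinom /= subn0 qfact0 mul1r divff //; exact: qfact_ne0.
Qed.

Lemma qbinom_gt n k : (n < k)%N -> qbinom q n k = 0.
Proof. by move=> h; rewrite /qbinom leqNgt h. Qed.

Lemma qbinomnn n : qbinom q n n = 1.
Proof.
rewrite /qbinom leqnn subnn qfact0 mulr1 divff //; exact: qfact_ne0.
Qed.

Lemma qpascal n k :
  qbinom q n.+1 k.+1 = qbinom q n k + q ^+ k.+1 * qbinom q n k.+1.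
Proof.
case: (ltngtP k n) => hk.
- have [d ->] : exists d, n = (k + d).+1 by exists (n - k.+1)%N; lia.
  rewrite /qbinom.
  have -> : (k.+1 <= (k + d).+2)%N by lia.
  have -> : (k <= (k + d).+1)%N by lia.
  have -> : (k.+1 <= (k + d).+1)%N by lia.
  have -> : ((k + d).+2 - k.+1 = d.+1)%N by lia.
  have -> : ((k + d).+1 - k = d.+1)%N by lia.
  have -> : ((k + d).+1 - k.+1 = d)%N by lia.
  rewrite !qfactS.
  have -> : q ^+ (k + d).+2 = q ^+ k.+1 * q ^+ d.+1 by rewrite -exprD; congr (_ ^+ _); lia.
  have h1 := qfact_ne0 k; have h2 := qfact_ne0 d; have h3 := qpow_ne1 k;
  have h4 := qpow_ne1 d.
  by field; rewrite ?h1 ?h2 ?h3 ?h4.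
- rewrite !qbinom_gt // ?mulr0 ?addr0 //; lia.
- by rewrite hk !qbinomnn (qbinom_gt (ltnSn n)) mulr0 addr0.
Qed.

Lemma qbinom_shift n k :
  (1 - q ^+ k.+1) * qbinom q n.+1 k.+1 = (1 - q ^+ n.+1) * qbinom q n k.
Proof.
case: (leqP k n) => hk.
- rewrite /qbinom hk ltnS hk subSS !qfactS.
  have h1 := qfact_ne0 k; have h2 := qfact_ne0 (n - k); have h3 := qpow_ne1 k.
  by field; rewrite ?h1 ?h2 ?h3 ?h4.
- by rewrite !qbinom_gt ?mulr0.
Qed.

Variable x : R.

Lemma RSE n : RS n x q = \sum_(0 <= k < n.+1) qbinom q n k * x ^+ k.
Proof. by rewrite /RS big_mkord. Qed.

Definition hq n := \sum_(0 <= k < n.+1) q ^+ k * qbinom q n k * x ^+ k.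

Lemma R1 n : RS n.+1 x q = x * RS n x q + hq n.
Proof.
rewrite !RSE /hq big_nat_recl // qbinom0 expr0 mulr1.
under eq_bigr do rewrite qpascal mulrDl.
rewrite big_split /= addrCA; congr (_ + _).
  by rewrite big_distrr; apply: eq_bigr => k _; rewrite exprS /= mulrCA.
rewrite big_nat_recr //= qbinom_gt // mulr0 mul0r addr0.
by rewrite [RHS]big_nat_recl // qbinom0 !expr0 !mulr1.
Qed.

Lemma R2 n : hq n.+1 = RS n.+1 x q - (1 - q ^+ n.+1) * x * RS n x q.
Proof.
suff : RS n.+1 x q - hq n.+1 = (1 - q ^+ n.+1) * x * RS n x q.
  by move=> <-; ring.
rewrite RSE /hq -sumrB big_nat_recl // expr0 !mul1r subrr add0r.
rewrite RSE big_distrr /=; apply: eq_bigr => k _.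
rewrite -mulrBl -[X in X - _]mul1r -mulrBl mulrC -mulrA qbinom_shift exprS; ring.
Qed.

Lemma RSrec n :
  RS n.+2 x q = (1 + x) * RS n.+1 x q - x * (1 - q ^+ n.+1) * RS n x q.
Proof. rewrite R1 R2; ring. Qed.

Lemma RS0 : RS 0 x q = 1.
Proof. by rewrite /RS big_ord1 qbinomnn expr0 mulr1. Qed.

Lemma RS1 : RS 1 x q = 1 + x.
Proof.
rewrite R1 RS0 /hq big_nat1 qbinomnn !expr0 !mulr1; ring.
Qed.

End QB.
Section Main.
Variable R : realFieldType.
Variables a q t nu : R.

Lemma sum_single N (G : nat -> R) c :
  (c < N)%N -> (forall m, m != c -> G m = 0) -> \sum_(0 <= m < N) G m = G c.
Proof.
move=> hc h; rewrite big_mkord (bigD1 (Ordinal hc)) //= big1 ?addr0 // => m hm.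
apply: h; apply: contra hm => /eqP e; apply/eqP; exact: val_inj.
Qed.

Lemma colB N (F : nat -> R) l r n c0 : (c0 < N)%N ->
  (forall m, m != c0 -> black_w a q m l r n = 0) ->
  \sum_(m < N) F m * black_w a q m l r n = F c0 * black_w a q c0 l r n.
Proof.
move=> hc h; rewrite -(big_mkord xpredT (fun m => F m * black_w a q m l r n)).
by apply: sum_single => // m /h ->; rewrite mulr0.
Qed.
Lemma colR N (F : nat -> R) l r n c0 : (c0 < N)%N ->
  (forall m, m != c0 -> red_w a q m l r n = 0) ->
  \sum_(m < N) F m * red_w a q m l r n = F c0 * red_w a q c0 l r n.
Proof.
move=> hc h; rewrite -(big_mkord xpredT (fun m => F m * red_w a q m l r n)).
by apply: sum_single => // m /h ->; rewrite mulr0.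
Qed.

Ltac colt c :=
  first [rewrite (@colB _ _ _ _ _ c) | rewrite (@colR _ _ _ _ _ c)];
  [ rewrite /black_w /red_w /=; case: eqP => [_|?]; [by rewrite ?mulr1 | lia]
  | lia
  | move=> ? /eqP ?; rewrite /black_w /red_w /=; case: eqP => [?|_] //; lia].

Lemma cB_FF (F : nat -> R) n :
  \sum_(m < n.+2) F m * black_w a q m false false n = F n.
Proof. colt n. Qed.
Lemma cB_FT (F : nat -> R) n :
  \sum_(m < n.+2) F m * black_w a q m false true n = F n.+1 * a.
Proof. colt n.+1. Qed.
Lemma cB_TT (F : nat -> R) n :
  \sum_(m < n.+2) F m * black_w a q m true true n = F n * a.
Proof. colt n. Qed.
Lemma cB_TF (F : nat -> R) n :
  \sum_(m < n.+3) F m * black_w a q m true false n.+1 = F n * (1 - q ^+ n.+1).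
Proof. colt n. Qed.
Lemma cR_FF (F : nat -> R) n :
  \sum_(m < n.+2) F m * red_w a q m false false n = F n * a.
Proof. colt n. Qed.
Lemma cR_FT (F : nat -> R) n :
  \sum_(m < n.+2) F m * red_w a q m false true n = F n.+1.
Proof. colt n.+1. Qed.
Lemma cR_TT (F : nat -> R) n :
  \sum_(m < n.+2) F m * red_w a q m true true n = F n.
Proof. colt n. Qed.
Lemma cR_TF (F : nat -> R) n :
  \sum_(m < n.+3) F m * red_w a q m true false n.+1 = F n * (a * (1 - q ^+ n.+1)).
Proof. colt n. Qed.
Lemma cB_TF0 (F : nat -> R) :
  \sum_(m < 2) F m * black_w a q m true false 0 = 0.
Proof. by apply: big1 => m _; rewrite /black_w /= addn1 mulr0. Qed.
Lemma cR_TF0 (F : nat -> R) :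
  \sum_(m < 2) F m * red_w a q m true false 0 = 0.
Proof. by apply: big1 => m _; rewrite /red_w /= addn1 mulr0. Qed.

Lemma black0 m n : (n.+1 < m)%N -> forall l r, black_w a q m l r n = 0.
Proof. move=> h l r; rewrite /black_w; case: eqP => // e; case: l r e => [] [] /= e; lia. Qed.
Lemma red0 m n : (n.+1 < m)%N -> forall l r, red_w a q m l r n = 0.
Proof. move=> h l r; rewrite /red_w; case: eqP => // e; case: l r e => [] [] /= e; lia. Qed.

Lemma prodL N1 N2 X (A : 'I_N2 -> R) (B : 'I_N1 -> R) :
  X * (\sum_(m2 < N2) A m2) * (\sum_(m1 < N1) B m1) =
  \sum_(m1 < N1) \sum_(m2 < N2) X * A m2 * B m1.
Proof.
rewrite big_distrr big_distrr /=; apply: eq_bigr => m1 _; rewrite big_distrl /=.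
by apply: eq_bigr => m2 _.
Qed.

Lemma prodR N1 N2 X (A : 'I_N2 -> R) (B : 'I_N1 -> R) :
  (\sum_(m2 < N2) A m2) * (\sum_(m1 < N1) B m1) * X =
  \sum_(m1 < N1) \sum_(m2 < N2) A m2 * B m1 * X.
Proof.
rewrite mulrC mulrA prodL; apply: eq_bigr => m1 _; apply: eq_bigr => m2 _; ring.
Qed.

Lemma sepL N1 N2 (C : nat -> nat -> R) (f g : nat -> R) (X : bool -> bool -> R)
  (Y Z : nat -> bool -> bool -> R) :
 (forall m1 m2, C m1 m2 = f m2 * g m1) ->
 \sum_(m1 < N1) \sum_(m2 < N2) C m1 m2 * (\sum_(k:bool) \sum_(l:bool) X k l * Y m2 k l * Z m1 k l) =
 \sum_(k:bool) \sum_(l:bool) X k l * (\sum_(m2 < N2) f m2 * Y m2 k l) * (\sum_(m1 < N1) g m1 * Z m1 k l).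
Proof.
move=> hC; rewrite !big_bool /= !prodL -!big_split /=; apply: eq_bigr => m1 _.
rewrite -!big_split /=; apply: eq_bigr => m2 _; rewrite hC !big_bool /=; ring.
Qed.

Lemma sepR N1 N2 (C : nat -> nat -> R) (f g : nat -> R) (X : bool -> bool -> R)
  (Y Z : nat -> bool -> bool -> R) :
 (forall m1 m2, C m1 m2 = f m2 * g m1) ->
 \sum_(m1 < N1) \sum_(m2 < N2) C m1 m2 * (\sum_(k:bool) \sum_(l:bool) Y m2 k l * Z m1 k l * X k l) =
 \sum_(k:bool) \sum_(l:bool) (\sum_(m2 < N2) f m2 * Y m2 k l) * (\sum_(m1 < N1) g m1 * Z m1 k l) * X k l.
Proof.
move=> hC; rewrite !big_bool /= !prodR -!big_split /=; apply: eq_bigr => m1 _.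
rewrite -!big_split /=; apply: eq_bigr => m2 _; rewrite hC !big_bool /=; ring.
Qed.

End Main.
Unset Implicit Arguments.

Theorem lemma2p7 (R : realFieldType) (a q t nu : R) :
  0 <= a -> a < 1 -> 0 < q -> q < 1 -> 0 < t -> t < 1 -> 0 < nu ->
  forall (i j : bool) (n1 n2 : nat),
    (forall m1 m2 : nat, (n1.+1 < m1)%N || (n2.+1 < m2)%N ->
       coefc q t nu m1 m2 * Zleft a q t nu i j m1 m2 n1 n2 = 0 /\
       coefc q t nu m1 m2 * Zright a q t nu i j m1 m2 n1 n2 = 0) /\
    \sum_(m1 < n1.+2) \sum_(m2 < n2.+2)
       coefc q t nu m1 m2 * Zleft a q t nu i j m1 m2 n1 n2 =
    \sum_(m1 < n1.+2) \sum_(m2 < n2.+2)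
       coefc q t nu m1 m2 * Zright a q t nu i j m1 m2 n1 n2.
Proof.
move=> a0 a1 q0 q1 t0 t1 nu0 i j n1 n2; split.
  move=> m1 m2 /orP [] h; rewrite /Zleft /Zright !big_bool /=.
    by rewrite !(black0 a q h) !(red0 a q h) !(mulr0, mul0r, addr0).
  by rewrite !(black0 a q h) !(red0 a q h) !(mulr0, mul0r, addr0).
have hnu : nu != 0 by rewrite gt_eqF.
have ht : t != 0 by rewrite gt_eqF.
rewrite (@sepL R _ _ (coefc q t nu) (fun m => RS m (-t) q)
   (fun m => (-(t*nu))^+m * RS m (- (1 / (nu ^+ 2 * t))) q)
   (fun k l => bdry_w a t nu i k) (fun m k l => black_w a q m k l n2)
   (fun m k l => black_w a q m l j n1)); last by move=> m1 m2; rewrite /coefc mulrA.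
rewrite (@sepR R _ _ (coefc q t nu) (fun m => RS m (-t) q)
   (fun m => (-(t*nu))^+m * RS m (- (1 / (nu ^+ 2 * t))) q)
   (fun k l => bdry_w a t nu l j) (fun m k l => red_w a q m i k n2)
   (fun m k l => red_w a q m k l n1)); last by move=> m1 m2; rewrite /coefc mulrA.
rewrite !big_bool /=.
pose F2 := fun m : nat => RS m (-t) q.
pose G1 := fun m : nat => (-(t*nu))^+m * RS m (- (1 / (nu ^+ 2 * t))) q.
case: i; case: j; case: n1 => [|p1]; case: n2 => [|p2].
all: rewrite ?(cB_FF a q F2) ?(cB_FT a q F2) ?(cB_TT a q F2) ?(cB_TF a q F2) ?(cB_TF0 a q F2).
all: rewrite ?(cR_FF a q F2) ?(cR_FT a q F2) ?(cR_TT a q F2) ?(cR_TF a q F2) ?(cR_TF0 a q F2).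
all: rewrite ?(cB_FF a q G1) ?(cB_FT a q G1) ?(cB_TT a q G1) ?(cB_TF a q G1) ?(cB_TF0 a q G1).
all: rewrite ?(cR_FF a q G1) ?(cR_FT a q G1) ?(cR_TT a q G1) ?(cR_TF a q G1) ?(cR_TF0 a q G1).
all: rewrite /F2 /G1 ?(RSrec q0 q1) ?(RS1 q0 q1) ?(RS0 q0 q1) /bdry_w /=.
all: rewrite !exprS ?expr0.
all: move: ((1 - a * nu * t) * (1 + a / nu))^-1 => z.
all: by field; rewrite ?hnu ?ht.
Qed.
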